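(* Let $\lambda>1$, $A=\mathrm{diag}(1,\lambda)$, and $f(x)=\tfrac12 x^TAx$ on $\mathbb{R}^2$. Consider the iteration $x_{k+1}=x_k-\alpha_kg_k$, $g_k=Ax_k$, where $x_1\in\mathbb{R}^2$, $x_2=x_1-\alpha_1g_1$ for some $\alpha_1>0$, and for $k\ge 2$ $$\alpha_k=\gamma_k\frac{s_{k-1}^Ts_{k-1}}{s_{k-1}^Ty_{k-1}}+(1-\gamma_k)\frac{s_{k-1}^Ty_{k-1}}{y_{k-1}^Ty_{k-1}},\qquad s_{k-1}=x_k-x_{k-1},\ y_{k-1}=g_k-g_{k-1},$$ with $\gamma_k\in(0,1)$ for all $k$. Assume $g_1^{(i)}\neq0$ and $g_2^{(i)}\ne0$ for $i=1,2$. Let $q_k=(g_k^{(1)})^2/(g_k^{(2)})^2$, $M_k=\log q_k$, let $\theta$ be a root of $\theta^2-\theta+2=0$, and $\xi_k=M_k+(\theta-1)M_{k-1}$. If $|\xi_2|>8\log\lambda$, then $\{\|g_k\|\}$ converges to zero $R$-superlinearly.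
   Context: $g_k^{(i)}$ is the $i$-th component of $g_k$ and $\|\cdot\|$ the Euclidean norm. A nonnegative sequence $\{a_k\}$ converges to zero $R$-superlinearly if $\lim_{k\to\infty}a_k^{1/k}=0$. *)

(* Defs.v *)
From Stdlib Require Import Reals.
From Coquelicot Require Import Coquelicot.
Open Scope R_scope.

(* Vectors of R^2 as pairs; component i=1 is fst, i=2 is snd. *)
Definition vec := (R * R)%type.
Definition dot (u v : vec) : R := fst u * fst v + snd u * snd v.
Definition vsub (u v : vec) : vec := (fst u - fst v, snd u - snd v).
Definition vscale (a : R) (u : vec) : vec := (a * fst u, a * snd u).
Definition vnorm (u : vec) : R := sqrt (dot u u).

(* A = diag(1, lam); gradient of f(x) = 1/2 x^T A x is A x. *)
Definition Amul (lam : R) (x : vec) : vec := (fst x, lam * snd x).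

(* k-th root of a nonnegative number a_k, with 0^(1/k) = 0. *)
Definition kth_root_seq (a : nat -> R) : nat -> R :=
  fun k => if Rlt_dec 0 (a k) then Rpower (a k) (/ INR k) else 0.

Definition R_superlinear (a : nat -> R) : Prop :=
  is_lim_seq (kth_root_seq a) 0.

(* Main.v *)
Require Import Defs.
From Stdlib Require Import Reals Lra Lia.
From Coquelicot Require Import Coquelicot.
Open Scope R_scope.

Lemma step_alg (lam g P Q : R) : 1 < lam -> 0 < g < 1 -> 0 < P -> 0 < Q ->
 let al := g*((P+Q)/(P+lam*Q)) + (1-g)*((P+lam*Q)/(P+lam^2*Q)) in
 0 < al /\ 0 < 1 - al /\ (1-al)^2 <= lam^4 /\ (1-al)^2 * P <= lam^4 * Q /\
 1 - lam*al <> 0 /\ (1-lam*al)^2 <= lam^2 /\ (1-lam*al)^2*Q <= lam^2 * P /\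
 exists E, 1 <= E <= lam^2 /\ (1-al)^2 * P^2 = (1-lam*al)^2 * Q^2 * E.
Proof.
intros Hl Hg HP HQ al.
set (S := P + Q). set (D1 := P + lam*Q). set (D2 := P + lam^2*Q).
assert (HSd : S = P + Q) by reflexivity.
assert (HS : 0 < S) by (unfold S; lra).
assert (HD1 : S <= D1) by (unfold S, D1; assert (0 <= (lam-1)*Q) by (apply Rmult_le_pos; nra); nra).
assert (HD2 : D1 <= D2) by (unfold D1, D2; assert (0 <= (lam-1)*(lam*Q)) by (apply Rmult_le_pos; nra); nra).
set (r1 := S / D1). set (r2 := S / D2).
assert (Hr1 : 0 < r1 <= 1).
{ unfold r1; split. apply Rdiv_lt_0_compat; lra.
  apply Rmult_le_reg_r with D1; [lra|]. unfold Rdiv; rewrite Rmult_assoc, Rinv_l; lra. }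
assert (Hr2 : 0 < r2 <= r1).
{ unfold r2, r1; split. apply Rdiv_lt_0_compat; lra.
  unfold Rdiv. apply Rmult_le_compat_l; [lra|]. apply Rinv_le_contravar; lra. }
set (u := g*r1 + (1-g)*lam*r2). set (v := g*r1 + (1-g)*r2).
assert (Hg1 : 0 < g * r1 <= g) by (split; [apply Rmult_lt_0_compat|]; nra).
assert (Hg2 : 0 < (1-g) * r2 <= 1-g) by (split; [apply Rmult_lt_0_compat|]; nra).
assert (Hv : 0 < v <= 1) by (unfold v; lra).
assert (Hg3 : (1-g)*r2 <= (1-g)*lam*r2) by (rewrite Rmult_assoc; rewrite (Rmult_comm lam r2); rewrite <- Rmult_assoc; nra).
assert (Hg4 : g*r1 <= lam*(g*r1)) by nra.
assert (Huv : v <= u <= lam * v) by (unfold u, v; split; nra).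
set (t := Q / S).
assert (Ht : 0 < t < 1).
{ unfold t; split. apply Rdiv_lt_0_compat; lra.
  apply Rmult_lt_reg_r with S; [lra|]. unfold Rdiv; rewrite Rmult_assoc, Rinv_l; lra. }
assert (HQt : Q = t * S) by (unfold t; field; lra).
assert (HPt : P = (1 - t) * S) by (unfold t, S; field; lra).
assert (E1 : 1 - al = (lam - 1) * u * t).
{ unfold al, u, t, r1, r2, D1, D2, S. field. split; [lra|]. split; nra. }
assert (E2 : 1 - lam * al = - ((lam - 1) * v * (1 - t))).
{ unfold al, v, t, r1, r2, D1, D2, S. field. split; [lra|]. split; nra. }
assert (Hu0 : 0 < u) by lra.
assert (Hul : u <= lam) by nra.
rewrite E2.
assert (K1 : 0 < (lam - 1) * u * t) by (apply Rmult_lt_0_compat; [apply Rmult_lt_0_compat|]; lra).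
assert (K2 : 0 < (lam - 1) * v * (1-t)) by (apply Rmult_lt_0_compat; [apply Rmult_lt_0_compat|]; lra).
assert (Hlu : (lam - 1) * u <= lam * lam) by nra.
assert (Hlv : (lam - 1) * v <= lam) by nra.
split; [|split; [lra|split; [|split; [|split; [lra|split; [|split]]]]]].
- assert (al = 1 - (lam - 1) * u * t) by lra.
  unfold al. assert (0 < (P + Q) / (P + lam * Q)) by (apply Rdiv_lt_0_compat; nra).
  assert (0 < (P + lam * Q) / (P + lam ^ 2 * Q)) by (apply Rdiv_lt_0_compat; nra).
  nra.
- rewrite E1. assert ((lam-1)*u*t <= lam*lam) by nra.
  assert (((lam - 1) * u * t)^2 <= (lam*lam)^2) by (apply pow_incr; lra). nra.
- rewrite E1, HQt, HPt.
  assert (0 <= (lam-1)*u) by nra.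
  assert (((lam - 1) * u)^2 <= (lam*lam)^2) by (apply pow_incr; lra).
  assert (t*(1-t) <= 1) by nra.
  assert (Heq : ((lam - 1) * u * t) ^ 2 * ((1 - t) * S) = (((lam - 1) * u)^2 * (t*(1-t))) * (t * S)) by ring.
  rewrite Heq. apply Rmult_le_compat_r; [nra|].
  assert (0 <= t*(1-t)) by nra.
  assert (((lam - 1) * u)^2 * (t*(1-t)) <= ((lam*lam)^2) * 1) by (apply Rmult_le_compat; nra).
  nra.
- assert ((lam-1)*v*(1-t) <= lam) by nra.
  assert (((lam - 1) * v * (1-t))^2 <= lam^2) by (apply pow_incr; lra). nra.
- rewrite HQt, HPt.
  assert (0 <= (lam-1)*v) by nra.
  assert (((lam - 1) * v)^2 <= lam^2) by (apply pow_incr; lra).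
  assert (t*(1-t) <= 1) by nra.
  assert (Heq : (- ((lam - 1) * v * (1 - t))) ^ 2 * (t * S) = (((lam - 1) * v)^2 * (t*(1-t))) * ((1-t) * S)) by ring.
  rewrite Heq. apply Rmult_le_compat_r; [nra|].
  assert (0 <= t*(1-t)) by nra.
  assert (((lam - 1) * v)^2 * (t*(1-t)) <= (lam^2) * 1) by (apply Rmult_le_compat; nra).
  nra.
- exists ((u/v)^2). split.
  + split.
    * assert (1 <= u/v). { apply Rmult_le_reg_r with v; [lra|]. unfold Rdiv; rewrite Rmult_assoc, Rinv_l; lra. }
      nra.
    * assert (u/v <= lam). { apply Rmult_le_reg_r with v; [lra|]. unfold Rdiv; rewrite Rmult_assoc, Rinv_l; lra. }
      assert (0 <= u/v) by (apply Rlt_le, Rdiv_lt_0_compat; lra).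
      apply pow_incr; lra.
  + rewrite E1, HQt, HPt. field. lra.
Qed.

Lemma window (a b e1 e2 L r : R) : 0 <= L -> 0 <= e1 <= 2*L -> 0 <= e2 <= 2*L ->
  r <= Rabs b + 3/2 * Rabs a ->
  (r/10 <= a \/ r/10 <= b \/ r/10 <= b - 2*a + e1 \/ r/10 <= (b - 2*a + e1) - 2*b + e2) /\
  (a <= 4*L - r/10 \/ b <= 4*L - r/10 \/ b - 2*a + e1 <= 4*L - r/10 \/
   (b - 2*a + e1) - 2*b + e2 <= 4*L - r/10).
Proof.
intros HL H1 H2 Hr.
destruct (Rcase_abs a) as [Ha|Ha]; destruct (Rcase_abs b) as [Hb|Hb].
- rewrite (Rabs_left a Ha), (Rabs_left b Hb) in Hr. split; lra.
- rewrite (Rabs_left a Ha), (Rabs_right b Hb) in Hr.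
  split; [lra|].
  destruct (Rle_dec b (-4*a)); lra.
- rewrite (Rabs_right a Ha), (Rabs_left b Hb) in Hr.
  split; [|lra].
  destruct (Rle_dec (-b) (4*a)); lra.
- rewrite (Rabs_right a Ha), (Rabs_right b Hb) in Hr. split; lra.
Qed.

Lemma bern (t : R) (n : nat) : 0 <= t ->
  1 + INR n * t + INR n * (INR n - 1) / 2 * t^2 <= (1+t)^n.
Proof.
intros Ht. induction n as [|n IH].
- simpl. lra.
- rewrite S_INR. simpl pow.
  assert (0 <= INR n) by apply pos_INR.
  assert (0 <= INR n * (INR n - 1) / 2 * t^2 * t).
  { destruct n. simpl. lra.
    rewrite S_INR. assert (0 <= INR n) by apply pos_INR.
    apply Rmult_le_pos; [|lra]. apply Rmult_le_pos; [|nra].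
    unfold Rdiv. apply Rmult_le_pos; nra. }
  assert ((1 + INR n * t + INR n * (INR n - 1) / 2 * t^2) * (1+t) <= (1+t)^n * (1+t)).
  { apply Rmult_le_compat_r; lra. }
  nra.
Qed.

Lemma superlin (d A B : R) : 0 < d ->
  exists N : nat, forall n : nat, (N <= n)%nat -> A + B * INR n < d * (7/5)^n.
Proof.
intros Hd.
set (T := (Rabs A + 2 * Rabs B + 1) / ((2/25) * d) + 2).
destruct (INR_archimed 1 T) as [N HN]; [lra|].
exists N. intros n Hn.
assert (HT : 2 <= T).
{ unfold T. assert (0 <= (Rabs A + 2 * Rabs B + 1) / ((2/25) * d)).
  { apply Rdiv_le_0_compat; [pose proof (Rabs_pos A); pose proof (Rabs_pos B); lra | lra]. }
  lra. }
assert (Hn' : T <= INR n). { apply le_INR in Hn. lra. }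
pose proof (bern (2/5) n ltac:(lra)) as Hb.
replace (1 + (2/5)) with (7/5) in Hb by lra.
set (x := INR n) in *.
assert (Hq : (Rabs A + 2 * Rabs B + 1) <= (2/25) * d * (x - 2)).
{ assert ((Rabs A + 2 * Rabs B + 1) / ((2/25) * d) <= x - 2) by (unfold T in Hn'; lra).
  apply Rmult_le_compat_l with (r := (2/25) * d) in H; [|lra].
  unfold Rdiv in H. rewrite <- Rmult_assoc, (Rmult_comm ((2/25)*d)), Rmult_assoc, Rinv_r in H; lra. }
assert (A <= Rabs A) by apply Rle_abs.
assert (B * x <= Rabs B * x) by (apply Rmult_le_compat_r; [lra| apply Rle_abs]).
pose proof (Rabs_pos B).
assert (Hd1 : d * (1 + x * (2/5) + x * (x - 1) / 2 * (2/5) ^ 2) <= d * (7/5) ^ n) by (apply Rmult_le_compat_l; lra).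
replace (d * (1 + x * (2/5) + x * (x - 1) / 2 * (2/5) ^ 2)) with (d + (2/5) * (d*x) + (2/25) * (d*x*x) - (2/25)*(d*x)) in Hd1 by field.
assert (Hd2 : (Rabs A + 2 * Rabs B + 1) * x <= (2/25) * d * (x - 2) * x) by (apply Rmult_le_compat_r; lra).
replace ((2/25) * d * (x - 2) * x) with ((2/25)*(d*x*x) - (4/25)*(d*x)) in Hd2 by field.
assert (Rabs A <= Rabs A * x) by (pose proof (Rabs_pos A); nra).
assert (0 < d * x) by nra.
assert (0 <= Rabs B * x) by (apply Rmult_le_pos; lra). lra.
Qed.

Lemma theta_facts (tr ti : R) : Cplus (Cminus (Cmult (tr,ti) (tr,ti)) (tr,ti)) (RtoC 2) = RtoC 0 ->
  tr = 1/2 /\ ti^2 = 7/4.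
Proof.
intros H. pose proof (f_equal fst H) as H1. pose proof (f_equal snd H) as H2.
simpl in H1, H2.
assert (ti <> 0).
{ intros ->. nra. }
assert (tr = 1/2).
{ assert (ti * (2*tr - 1) = 0) by nra. apply Rmult_integral in H3. destruct H3; [contradiction|lra]. }
split; [auto|]. subst. nra.
Qed.

Lemma sqrt2_bound : 7/5 < sqrt 2 /\ 5/4 <= sqrt 2 /\ sqrt 2 <= 3/2.
Proof.
pose proof (sqrt_pos 2). pose proof (sqrt_sqrt 2 ltac:(lra)). split; [|split]; nra.
Qed.

Lemma alpha_form (lam g al' : R) (X : vec) : 0 < lam -> al' <> 0 -> fst X <> 0 ->
  let X' := vsub X (vscale al' (Amul lam X)) in
  let s := vsub X' X in let y := vsub (Amul lam X') (Amul lam X) in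
  let P := (fst X)^2 in let Q := (lam * snd X)^2 in
  g * (dot s s / dot s y) + (1 - g) * (dot s y / dot y y) =
  g * ((P+Q)/(P+lam*Q)) + (1-g)*((P+lam*Q)/(P+lam^2*Q)).
Proof.
intros Hl Ha HX X' s y P Q.
assert (HP : 0 < P) by (unfold P; apply pow2_gt_0; auto).
assert (HQ : 0 <= Q) by (unfold Q; apply pow2_ge_0).
assert (Ha2 : 0 < al'^2) by (apply pow2_gt_0; auto).
assert (E1 : dot s s = al'^2 * (P + Q)) by (unfold s, X', P, Q, dot, vsub, vscale, Amul; simpl; ring).
assert (E2 : dot s y = al'^2 * (P + lam*Q)) by (unfold s, y, X', P, Q, dot, vsub, vscale, Amul; simpl; ring).
assert (E3 : dot y y = al'^2 * (P + lam^2*Q)) by (unfold y, X', P, Q, dot, vsub, vscale, Amul; simpl; ring).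
rewrite E1, E2, E3.
assert (0 <= lam * Q) by nra. assert (0 <= lam^2 * Q) by (assert (0 <= lam^2) by nra; nra).
field. repeat split; lra.
Qed.

Lemma ln_bound (u P Q c : R) : 0 < u -> 0 < P -> 0 < Q -> 0 < c -> u * P <= c * Q ->
  ln u <= ln c + ln Q - ln P.
Proof.
intros. assert (ln (u*P) <= ln (c*Q)) by (apply ln_le; [nra|auto]).
rewrite !ln_mult in H4 by auto. lra.
Qed.

Lemma ln_bound1 (u c : R) : 0 < u -> 0 < c -> u <= c -> ln u <= ln c.
Proof. intros. apply ln_le; auto. Qed.

Lemma acc (u w : nat -> R) (c : R) : 0 <= c ->
  (forall n, u (S (S (S n))) <= u (S (S n)) + c) ->
  (forall n, u (S (S (S n))) <= u (S (S n)) + c + w (S n)) ->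
  forall j k, (j + 3 <= k)%nat -> u k <= u 2%nat + c * INR k + w (S j).
Proof.
intros Hc H1 H2.
assert (A : forall n, u (n + 2)%nat <= u 2%nat + c * INR n).
{ induction n. simpl. lra.
  replace (S n + 2)%nat with (S (S (S n))) by lia. rewrite S_INR.
  replace (n+2)%nat with (S (S n)) in IHn by lia. specialize (H1 n). lra. }
assert (B : forall j n, u (j + n + 3)%nat <= u 2%nat + c * INR (j + n + 1) + w (S j)).
{ intros j n. induction n.
  - replace (j + 0 + 3)%nat with (S (S (S j))) by lia. specialize (H2 j).
    specialize (A j). replace (j + 2)%nat with (S (S j)) in A by lia.
    replace (j+0+1)%nat with (S j) by lia. rewrite S_INR in *. lra.
  - replace (j + S n + 3)%nat with (S (S (S (j + n + 1)))) by lia.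
    replace (j + n + 3)%nat with (S (S (j + n + 1))) in IHn by lia.
    specialize (H1 (j + n + 1)%nat).
    replace (j + S n + 1)%nat with (S (j + n + 1)) by lia. rewrite S_INR. lra. }
intros j k Hk.
replace k with (j + (k - j - 3) + 3)%nat by lia.
specialize (B j (k - j - 3)%nat).
assert (c * INR (j + (k - j - 3) + 1) <= c * INR (j + (k - j - 3) + 3)).
{ apply Rmult_le_compat_l; auto. apply le_INR. lia. }
lra.
Qed.

Lemma exp_le' (x y : R) : x <= y -> exp x <= exp y.
Proof. intros [H|H]; [left; apply exp_increasing; auto | right; subst; auto]. Qed.

Theorem theorem2 (lam : R) (x : nat -> vec) (alpha gamma : nat -> R) (theta : C) :
  1 < lam ->
  (forall k : nat, (1 <= k)%nat ->
     x (S k) = vsub (x k) (vscale (alpha k) (Amul lam (x k)))) ->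
  0 < alpha 1%nat ->
  (forall k : nat, (2 <= k)%nat ->
     let s := vsub (x k) (x (k - 1)%nat) in
     let y := vsub (Amul lam (x k)) (Amul lam (x (k - 1)%nat)) in
     alpha k = gamma k * (dot s s / dot s y) + (1 - gamma k) * (dot s y / dot y y)) ->
  (forall k : nat, (2 <= k)%nat -> 0 < gamma k < 1) ->
  fst (Amul lam (x 1%nat)) <> 0 -> snd (Amul lam (x 1%nat)) <> 0 ->
  fst (Amul lam (x 2%nat)) <> 0 -> snd (Amul lam (x 2%nat)) <> 0 ->
  Cplus (Cminus (Cmult theta theta) theta) (RtoC 2) = RtoC 0 ->
  let q := fun k : nat => (fst (Amul lam (x k)))^2 / (snd (Amul lam (x k)))^2 in
  let M := fun k : nat => ln (q k) in
  Cmod (Cplus (RtoC (M 2%nat)) (Cmult (Cminus theta (RtoC 1)) (RtoC (M 1%nat))))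
    > 8 * ln lam ->
  R_superlinear (fun k => vnorm (Amul lam (x k))).
Proof.
intros Hl Hstep Ha1 Halpha Hgam H11 H12 H21 H22 Htheta q M Hxi.
set (L := ln lam).
assert (HL : 0 < L) by (unfold L; rewrite <- ln_1; apply ln_increasing; lra).
set (a := fun k => (fst (Amul lam (x k)))^2).
set (b := fun k => (snd (Amul lam (x k)))^2).
assert (Hg1 : forall n, fst (Amul lam (x (S (S n)))) = (1 - alpha (S n)) * fst (Amul lam (x (S n)))).
{ intro n. rewrite (Hstep (S n)) by lia. unfold vsub, vscale, Amul; simpl; ring. }
assert (Hg2 : forall n, snd (Amul lam (x (S (S n)))) = (1 - lam * alpha (S n)) * snd (Amul lam (x (S n)))).
{ intro n. rewrite (Hstep (S n)) by lia. unfold vsub, vscale, Amul; simpl; ring. }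
assert (Hst : forall n, fst (Amul lam (x (S n))) <> 0 -> 0 < alpha (S n) ->
   alpha (S (S n)) = gamma (S (S n)) * ((a (S n) + b (S n))/(a (S n) + lam * b (S n)))
       + (1 - gamma (S (S n))) * ((a (S n) + lam * b (S n))/(a (S n) + lam^2 * b (S n)))).
{ intros n Hf Hal. pose proof (Halpha (S (S n)) ltac:(lia)) as HA. cbv zeta in HA.
  replace (S (S n) - 1)%nat with (S n) in HA by lia.
  rewrite (Hstep (S n)) in HA by lia. rewrite HA.
  apply alpha_form; [lra|lra|]. exact Hf. }
assert (Inv : forall n, fst (Amul lam (x (S n))) <> 0 /\ snd (Amul lam (x (S n))) <> 0 /\
   fst (Amul lam (x (S (S n)))) <> 0 /\ snd (Amul lam (x (S (S n)))) <> 0 /\ 0 < alpha (S n)).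
{ induction n as [|n IH].
  - repeat split; auto.
  - destruct IH as (I1 & I2 & I3 & I4 & I5).
    assert (HP : 0 < a (S n)) by (unfold a; apply pow2_gt_0; auto).
    assert (HQ : 0 < b (S n)) by (unfold b; apply pow2_gt_0; auto).
    pose proof (step_alg lam (gamma (S (S n))) (a (S n)) (b (S n)) Hl (Hgam (S (S n)) ltac:(lia)) HP HQ) as SA.
    cbv zeta in SA. rewrite <- Hst in SA by auto.
    destruct SA as (S1 & S2 & _ & _ & S5 & _).
    repeat split; auto.
    + rewrite Hg1. apply Rmult_integral_contrapositive_currified; lra.
    + rewrite Hg2. apply Rmult_integral_contrapositive_currified; auto. }
assert (Ha : forall n, 0 < a (S n)) by (intro n; unfold a; apply pow2_gt_0; apply (Inv n)).
assert (Hb : forall n, 0 < b (S n)) by (intro n; unfold b; apply pow2_gt_0; apply (Inv n)).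
set (la := fun k => ln (a k)). set (lb := fun k => ln (b k)).
assert (HMk : forall n, M (S n) = la (S n) - lb (S n)).
{ intro n. unfold M, q, la, lb. change (ln (a (S n) / b (S n)) = ln (a (S n)) - ln (b (S n))).
  apply ln_div; auto. }
assert (L4 : ln (lam^4) = 4 * L) by (rewrite ln_pow by lra; unfold L; simpl INR; ring).
assert (L2 : ln (lam^2) = 2 * L) by (rewrite ln_pow by lra; unfold L; simpl INR; ring).
assert (Facts : forall n,
   la (S (S (S n))) <= la (S (S n)) + 4 * L /\ la (S (S (S n))) <= la (S (S n)) + 4 * L + (- M (S n)) /\ lb (S (S (S n))) <= lb (S (S n)) + 2 * L /\ lb (S (S (S n))) <= lb (S (S n)) + 2 * L + M (S n) /\ exists e, 0 <= e <= 2 * L /\ M (S (S (S n))) = M (S (S n)) - 2 * M (S n) + e).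
{ intro n.
  destruct (Inv n) as (I1 & I2 & I3 & I4 & I5).
  pose proof (step_alg lam (gamma (S (S n))) (a (S n)) (b (S n)) Hl (Hgam (S (S n)) ltac:(lia)) (Ha n) (Hb n)) as SA.
  cbv zeta in SA. rewrite <- Hst in SA by auto.
  set (al := alpha (S (S n))) in *.
  destruct SA as (S1 & S2 & S3 & S4 & S5 & S6 & S7 & E & HE1 & HE2).
  assert (Ea : a (S (S (S n))) = (1 - al)^2 * a (S (S n))) by (unfold a; rewrite Hg1; fold al; ring).
  assert (Eb : b (S (S (S n))) = (1 - lam * al)^2 * b (S (S n))) by (unfold b; rewrite Hg2; fold al; ring).
  assert (P1 : 0 < (1 - al)^2) by (apply pow2_gt_0; lra).
  assert (P2 : 0 < (1 - lam * al)^2) by (apply pow2_gt_0; auto).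
  assert (Pl4 : 0 < lam^4) by (apply pow_lt; lra).
  assert (Pl2 : 0 < lam^2) by (apply pow_lt; lra).
  assert (Ela : la (S (S (S n))) = ln ((1 - al)^2) + la (S (S n))) by (unfold la; rewrite Ea, ln_mult; auto; apply (Ha (S n))).
  assert (Elb : lb (S (S (S n))) = ln ((1 - lam * al)^2) + lb (S (S n))) by (unfold lb; rewrite Eb, ln_mult; auto; apply (Hb (S n))).
  pose proof (ln_bound1 _ _ P1 Pl4 S3) as B1.
  pose proof (ln_bound _ _ _ _ P1 (Ha n) (Hb n) Pl4 S4) as B2.
  pose proof (ln_bound1 _ _ P2 Pl2 S6) as B3.
  pose proof (ln_bound _ _ _ _ P2 (Hb n) (Ha n) Pl2 S7) as B4.
  rewrite HMk. fold (la (S n)) (lb (S n)) in B2, B4.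
  assert (HE0 : 0 < E) by lra.
  assert (LE : ln ((1 - al) ^ 2) + 2 * la (S n) = ln ((1 - lam * al) ^ 2) + 2 * lb (S n) + ln E).
  { assert (ln ((1 - al) ^ 2 * a (S n) ^ 2) = ln ((1 - lam * al) ^ 2 * b (S n) ^ 2 * E)) by (rewrite HE2; auto).
    assert (0 < a (S n) ^ 2) by (apply pow_lt; auto).
    assert (0 < b (S n) ^ 2) by (apply pow_lt; auto).
    assert (0 < (1 - lam * al) ^ 2 * b (S n) ^ 2) by (apply Rmult_lt_0_compat; auto).
    rewrite (ln_mult ((1 - al) ^ 2)), (ln_mult ((1 - lam * al) ^ 2 * b (S n) ^ 2)), (ln_mult ((1 - lam * al) ^ 2)) in H by auto.
    rewrite (ln_pow (a (S n)) 2), (ln_pow (b (S n)) 2) in H by auto. unfold la, lb. simpl INR in H. lra. }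
  assert (LE1 : 0 <= ln E) by (rewrite <- ln_1; apply ln_le; lra).
  assert (LE2 : ln E <= 2 * L) by (rewrite <- L2; apply ln_le; lra).
  repeat split; try lra.
  exists (ln E). split; [lra|]. rewrite !HMk. lra. }
destruct theta as [tr ti].
destruct (theta_facts tr ti Htheta) as [Htr Hti].
set (xi := fun n => Cplus (RtoC (M (S n))) (Cmult (Cminus (tr,ti) (RtoC 1)) (RtoC (M n)))).
assert (Hxi1 : Cmod (xi 1%nat) > 8 * L) by exact Hxi.
destruct sqrt2_bound as (Q1 & Q2 & Q3).
assert (Cth : Cmod (tr,ti) = sqrt 2).
{ unfold Cmod; simpl fst; simpl snd. f_equal. rewrite Htr. simpl. nra. }
assert (Cth1 : Cmod (Cminus (tr,ti) (RtoC 1)) = sqrt 2).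
{ unfold Cmod, Cminus, Cplus, Copp, RtoC; simpl fst; simpl snd. f_equal. rewrite Htr.
  simpl. nra. }
assert (Hrec : forall m, exists e, 0 <= e <= 2 * L /\
   xi (S (S m)) = Cplus (Cmult (tr,ti) (xi (S m))) (RtoC e)).
{ intro m. destruct (Facts m) as (_ & _ & _ & _ & e & He & HMe).
  exists e. split; auto. unfold xi. rewrite HMe.
  unfold Cplus, Cmult, Cminus, Copp, RtoC; simpl fst; simpl snd.
  apply injective_projections; simpl fst; simpl snd.
  - rewrite Htr. assert (Hti2 : ti*ti = 7/4) by nra.
    match goal with |- ?A = ?B => assert (Hd : A - B = (ti*ti - 7/4) * M (S m)) by field end.
    rewrite Hti2 in Hd. lra.
  - rewrite Htr. field. }
set (r := fun n => Cmod (xi n)).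
assert (Hgrow : forall m, sqrt 2 * r (S m) - 2 * L <= r (S (S m))).
{ intro m. destruct (Hrec m) as (e & He & HE). unfold r. rewrite HE.
  assert (Cmod (Cmult (tr,ti) (xi (S m))) <= Cmod (Cplus (Cmult (tr, ti) (xi (S m))) (RtoC e)) + Cmod (Copp (RtoC e))).
  { eapply Rle_trans; [|apply Cmod_triangle].
    right. f_equal. rewrite <- Cplus_assoc, Cplus_opp_r, Cplus_0_r. reflexivity. }
  rewrite Cmod_opp, Cmod_R, Cmod_mult, Cth in H. rewrite Rabs_right in H by lra. lra. }
assert (Hup : forall n, r n <= Rabs (M (S n)) + 3/2 * Rabs (M n)).
{ intro n. unfold r, xi. eapply Rle_trans; [apply Cmod_triangle|].
  rewrite Cmod_mult, Cth1, !Cmod_R.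
  pose proof (Rabs_pos (M n)). nra. }
set (D := fun n => r (S n) - 8 * L).
assert (HD0 : 0 < D 0%nat) by (unfold D, r; lra).
assert (HDg : forall n, D 0%nat * (7/5)^n <= D n).
{ induction n as [|n IH].
  - simpl. lra.
  - pose proof (Hgrow n).
    assert (0 <= D 0%nat * (7/5)^n) by (apply Rmult_le_pos; [lra| apply pow_le; lra]).
    assert (ED : forall k, D k = r (S k) - 8 * L) by reflexivity.
    rewrite (ED n) in IH; rewrite (ED (S n)). simpl pow.
    assert (0 <= r (S n) - 8 * L) by lra.
    assert (0 <= (sqrt 2 - 7/5) * (r (S n) - 8 * L)) by (apply Rmult_le_pos; lra).
    assert (0 <= (sqrt 2 - 5/4) * L) by (apply Rmult_le_pos; lra).
    lra. }
assert (Acca : forall j k, (j+3 <= k)%nat -> la k <= la 2%nat + 4*L * INR k + (- M (S j))).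
{ apply (acc la (fun i => - M i) (4*L)); [lra| intro m; apply (Facts m) | intro m; apply (Facts m)]. }
assert (Accb : forall j k, (j+3 <= k)%nat -> lb k <= lb 2%nat + 2*L * INR k + M (S j)).
{ apply (acc lb M (2*L)); [lra| intro m; apply (Facts m) | intro m; apply (Facts m)]. }
unfold R_superlinear. apply is_lim_seq_spec. intros eps.
set (l := ln eps).
set (C1 := Rmax (la 2%nat) (lb 2%nat) + 4*L).
destruct (superlin (D 0%nat / 10) (ln 2 + C1 + 6*(4*L - 2*l)) (4*L - 2*l)) as [N HN]; [lra|].
exists (N + 6)%nat. intros K HK.
set (n := (K - 6)%nat). assert (HKn : K = (n + 6)%nat) by lia.
specialize (HN n ltac:(lia)).
destruct (Facts n) as (_&_&_&_& e1 & He1 & HM1).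
destruct (Facts (S n)) as (_&_&_&_& e2 & He2 & HM2).
pose proof (window (M (S n)) (M (S (S n))) e1 e2 L (r (S n)) ltac:(lra) He1 He2 (Hup (S n))) as [W1 W2].
rewrite <- HM1 in W1, W2. rewrite <- HM2 in W1, W2.
assert (BA : la K <= la 2%nat + 4*L*INR K - r (S n)/10).
{ destruct W1 as [W|[W|[W|W]]];
  [pose proof (Acca n K ltac:(lia)) | pose proof (Acca (S n) K ltac:(lia)) |
   pose proof (Acca (S (S n)) K ltac:(lia)) | pose proof (Acca (S (S (S n))) K ltac:(lia))]; lra. }
assert (BB : lb K <= lb 2%nat + 2*L*INR K + 4*L - r (S n)/10).
{ destruct W2 as [W|[W|[W|W]]];
  [pose proof (Accb n K ltac:(lia)) | pose proof (Accb (S n) K ltac:(lia)) |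
   pose proof (Accb (S (S n)) K ltac:(lia)) | pose proof (Accb (S (S (S n))) K ltac:(lia))]; lra. }
pose proof (HDg n) as HDn.
assert (HK' : INR K = INR n + 6) by (rewrite HKn, plus_INR; simpl; ring).
assert (HKpos : 0 < INR K) by (rewrite HK'; pose proof (pos_INR n); lra).
set (Bnd := C1 + 4*L*INR K - r (S n)/10).
assert (0 <= L * INR K) by (apply Rmult_le_pos; lra).
pose proof (Rmax_l (la 2%nat) (lb 2%nat)). pose proof (Rmax_r (la 2%nat) (lb 2%nat)).
assert (BA' : la K <= Bnd) by (unfold Bnd, C1; lra).
assert (BB' : lb K <= Bnd) by (unfold Bnd, C1; lra).
assert (Key : ln 2 + Bnd < 2 * (INR K * l)).
{ unfold Bnd. rewrite HK'. unfold D in HN, HDn. rewrite HK' in *. lra. }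
assert (HaK : 0 < a K) by (replace K with (S (n+5)) by lia; apply Ha).
assert (HbK : 0 < b K) by (replace K with (S (n+5)) by lia; apply Hb).
assert (EaK : a K <= exp Bnd) by (rewrite <- (exp_ln (a K)) by auto; apply exp_le'; exact BA').
assert (EbK : b K <= exp Bnd) by (rewrite <- (exp_ln (b K)) by auto; apply exp_le'; exact BB').
assert (Hv : vnorm (Amul lam (x K)) = sqrt (a K + b K)) by (unfold vnorm, dot, a, b; f_equal; ring).
assert (Hvp : 0 < sqrt (a K + b K)) by (apply sqrt_lt_R0; lra).
assert (Hlnv : 2 * ln (sqrt (a K + b K)) <= ln 2 + Bnd).
{ replace (2 * ln (sqrt (a K + b K))) with (ln (sqrt (a K + b K) * sqrt (a K + b K))) by (rewrite ln_mult by auto; ring).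
  rewrite sqrt_sqrt by lra.
  replace (ln 2 + Bnd) with (ln (2 * exp Bnd)) by (rewrite ln_mult, ln_exp; [ring|lra|apply exp_pos]).
  apply ln_le; lra. }
unfold kth_root_seq. rewrite Hv.
destruct (Rlt_dec 0 (sqrt (a K + b K))) as [Hp|Hp]; [|lra].
rewrite Rminus_0_r. unfold Rpower. rewrite Rabs_right by (left; apply exp_pos).
rewrite <- (exp_ln eps) by (apply cond_pos). apply exp_increasing. fold l.
apply Rmult_lt_reg_l with (INR K); [lra|].
rewrite <- Rmult_assoc, Rinv_r, Rmult_1_l by lra. lra.
Qed.
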